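(* Let $G$ be a map graph with a corresponding planar bipartite graph $B$, let $\mathcal{D}=(T,\beta_{\mathcal{D}})$ be a nice tree decomposition of $B$, and let $\mathcal{D}'$ be derived from $\mathcal{D}$ as described in the context. Let $s\in S(G)$ and let $t$ be a node of $T$ labelled introduce$(s)$ in $\mathcal{D}$, with unique child $t'$. Then $\mathsf{Original}(t)=\mathsf{Original}(t')$ and $\mathsf{Fake}(t)=\mathsf{Fake}(t')$.
   Context: All graphs are finite and simple. For a bipartite graph $B$ with bipartition $V(B)=W\uplus U$, the half-square of $B$ is the graph on $W$ in which two vertices are adjacent iff they are at distance exactly $2$ in $B$. A graph $G$ is a map graph iff it is the half-square of some planar bipartite graph $B$; such $B$ (with $W=V(G)$) is a corresponding planar bipartite graph, and $S(G)=U$ is the set of special vertices. A tree decomposition $(T,\beta)$: rooted tree $T$, bags covering all vertices and edges, and for each vertex the nodes containing it induce a connected subtree. $\gamma_{\mathcal{D}}(t)$ is the union of bags of $t$ and its descendants. A nice tree decomposition has empty root bag and each node is a leaf (empty bag), introduce$(w)$ (one child $u$, $\beta(t)=\beta(u)\cup\{w\}$, $w\notin\beta(u)$), forget$(w)$ (one child $u$, $\beta(t)=\beta(u)\setminus\{w\}$, $w\in \beta(u)$), or join (two children with identical bags equal to $\beta(t)$). The derived decomposition $\mathcal{D}'=(T,\beta_{\mathcal{D}'})$ has $\beta_{\mathcal{D}'}(t)=(\beta_{\mathcal{D}}(t)\cap V(G))\cup\bigcup_{s\in\beta_{\mathcal{D}}(t)\cap S(G)}(N_B(s)\cap\gamma_{\mathcal{D}}(t))$.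 Define $\mathsf{Original}(t)=\beta_{\mathcal{D}}(t)\cap\beta_{\mathcal{D}'}(t)$ and $\mathsf{Fake}(t)=\beta_{\mathcal{D}'}(t)\setminus\beta_{\mathcal{D}}(t)$. *)

(* Defs.v *)
From mathcomp Require Import all_boot.
From mathcomp Require Import perm.
Set Implicit Arguments. Unset Strict Implicit. Unset Printing Implicit Defensive.

Definition simple_graph (V : finType) (e : rel V) : Prop :=
  symmetric e /\ irreflexive e.

Definition bipartition (V : finType) (e : rel V) (W U : {set V}) : Prop :=
  [/\ W :&: U = set0, W :|: U = setT &
      forall x y, e x y -> (x \in W) && (y \in U) || (x \in U) && (y \in W)].

Definition dart (V : finType) (e : rel V) := {x : V * V | e x.1 x.2}.

(* reversal of a dart (correct when e is symmetric) *)
Definition drev (V : finType) (e : rel V) (d : dart e) : dart e :=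
  insubd d ((val d).2, (val d).1).

Definition rotation_system (V : finType) (e : rel V) (sigma : {perm dart e}) :=
  (forall d, (val (sigma d)).1 = (val d).1) /\
  (forall d d', (val d).1 = (val d').1 -> fconnect sigma d d').

(* number of faces of the embedding given by sigma: orbits of sigma o rev *)
Definition nfaces (V : finType) (e : rel V) (sigma : {perm dart e}) : nat :=
  fcard (fun d => sigma (drev d)) predT.

Definition nisolated (V : finType) (e : rel V) : nat :=
  #|[set v | [forall w, ~~ e v w]]|.

(* A finite simple graph is planar iff it has a rotation system of genus 0,
   i.e. Euler's formula V - E + F = 2 holds on every component with an edge.
   Summed over components (isolated vertices contribute 1 vertex, 0 faces):
   |V| + F + #isolated = |E| + 2 #components, with |E| = #darts / 2. *)
Definition planar (V : finType) (e : rel V) : Prop :=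
  exists sigma : {perm dart e}, rotation_system sigma /\
    2 * #|V| + 2 * nfaces sigma + 2 * nisolated e = #|{: dart e}| + 4 * n_comp e predT.

Definition dist2 (V : finType) (e : rel V) (x y : V) : bool :=
  [&& x != y, ~~ e x y & [exists u, e x u && e u y]].

Definition half_square (V : finType) (e : rel V) (W : {set V}) (g : rel V) : Prop :=
  forall x y, g x y = [&& x \in W, y \in W & dist2 e x y].

Definition rooted_tree (N : finType) (par : N -> option N) (r : N) : Prop :=
  par r = None /\ forall t, exists k, iter k (obind par) (Some t) = Some r.

Definition tadj (N : finType) (par : N -> option N) : rel N :=
  fun a b => (par a == Some b) || (par b == Some a).

Definition children (N : finType) (par : N -> option N) (t : N) : {set N} :=
  [set c | par c == Some t].

Definition desc (N : finType) (par : N -> option N) (s t : N) : bool :=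
  connect (fun a b => par a == Some b) s t.

Definition tree_connected (N : finType) (par : N -> option N) (X : {set N}) : Prop :=
  forall a b, a \in X -> b \in X ->
    connect (fun x y => [&& tadj par x y, x \in X & y \in X]) a b.

Definition tree_decomposition (V N : finType) (e : rel V)
    (par : N -> option N) (r : N) (beta : N -> {set V}) : Prop :=
  [/\ rooted_tree par r,
      forall v, exists t, v \in beta t,
      forall x y, e x y -> exists t, (x \in beta t) && (y \in beta t) &
      forall v, tree_connected par [set t | v \in beta t]].

Definition is_leaf (V N : finType) (par : N -> option N) (beta : N -> {set V}) t :=
  children par t = set0 /\ beta t = set0.
Definition is_introduce (V N : finType) (par : N -> option N) (beta : N -> {set V})
    t (w : V) (u : N) :=
  [/\ children par t = [set u], beta t = w |: beta u & w \notin beta u].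
Definition is_forget (V N : finType) (par : N -> option N) (beta : N -> {set V})
    t (w : V) (u : N) :=
  [/\ children par t = [set u], beta t = beta u :\ w & w \in beta u].
Definition is_join (V N : finType) (par : N -> option N) (beta : N -> {set V}) t :=
  exists u1 u2, [/\ u1 != u2, children par t = [set u1; u2],
                   beta u1 = beta t & beta u2 = beta t].

Definition nice_tree_decomposition (V N : finType) (e : rel V)
    (par : N -> option N) (r : N) (beta : N -> {set V}) : Prop :=
  [/\ tree_decomposition e par r beta, beta r = set0 &
      forall t, [\/ is_leaf par beta t,
                    exists w u, is_introduce par beta t w u,
                    exists w u, is_forget par beta t w u |
                    is_join par beta t]].

Definition gamma (V N : finType) (par : N -> option N) (beta : N -> {set V}) t : {set V} :=
  \bigcup_(s | desc par s t) beta s.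

Definition nbhd (V : finType) (e : rel V) (s : V) : {set V} := [set w | e s w].

(* the derived decomposition D' (W = V(G), U = S(G)) *)
Definition derived_bag (V N : finType) (e : rel V) (W U : {set V})
    (par : N -> option N) (beta : N -> {set V}) t : {set V} :=
  (beta t :&: W) :|:
  \bigcup_(s in beta t :&: U) (nbhd e s :&: gamma par beta t).

Definition Original (V N : finType) (e : rel V) (W U : {set V})
    (par : N -> option N) (beta : N -> {set V}) t : {set V} :=
  beta t :&: derived_bag e W U par beta t.

Definition Fake (V N : finType) (e : rel V) (W U : {set V})
    (par : N -> option N) (beta : N -> {set V}) t : {set V} :=
  derived_bag e W U par beta t :\: beta t.

(* Main.v *)
Require Import Defs.
From mathcomp Require Import all_boot.
From mathcomp Require Import zify.

Lemma desc_iter (N : finType) (par : N -> option N) x y :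
  desc par x y -> exists k, iter k (obind par) (Some x) = Some y.
Proof.
move=> /connectP [p pth ->]; exists (size p).
elim: p x pth => [|z p IH] x // pth.
move: pth; rewrite [path _ _ _]/= => /andP [/eqP H pth].
by rewrite [size _]/= iterSr /= H; exact: IH.
Qed.

Lemma no_cycle (N : finType) (par : N -> option N) r t t' :
  rooted_tree par r -> par t' = Some t -> ~ desc par t t'.
Proof.
move=> [Hr Hall] Hp /desc_iter [k Hk].
set f := obind par.
have Hm : iter k.+1 f (Some t) = Some t by rewrite iterS Hk /= Hp.
have Hnone : forall j, iter j f None = None by elim => //= j ->.
have Hsome : forall n, iter n f (Some t) <> None.
  elim/ltn_ind => n IH; case: (leqP n k) => Hn.
  - move=> H0.
    have : iter (k - n) f (iter n f (Some t)) = Some t' by rewrite -iterD subnK.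
    by rewrite H0 Hnone.
  - rewrite -(subnK Hn) iterD Hm; apply: IH; lia.
move: (Hall t) => [K HK]; apply: (Hsome K.+1).
by rewrite iterS HK /= Hr.
Qed.

Lemma desc_step (N : finType) (par : N -> option N) a b :
  desc par a b -> a != b -> forall c, par a = Some c -> desc par c b.
Proof.
move=> /connectP [[|z p] /= pth Hl] Hab c Hc.
  by rewrite Hl eqxx in Hab.
move/andP: pth => [/eqP Hz pth]; rewrite Hc in Hz; case: Hz => ->.
by apply/connectP; exists p.
Qed.

Lemma closure (N : finType) (par : N -> option N) (X : {set N}) t' a b :
  t' \notin X -> a \in X -> desc par a t' ->
  connect (fun x y => [&& tadj par x y, x \in X & y \in X]) a b -> desc par b t'.
Proof.
move=> HX Ha Hd /connectP [p pth ->].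
elim: p a Ha Hd pth => [|z p IH] a Ha Hd //= /andP [/and3P [Hadj _ Hz] pth].
apply: IH Hz _ pth; case/orP: Hadj => /eqP H.
- apply: desc_step Hd _ _ H; apply/eqP => E; subst; by rewrite Ha in HX.
- apply: connect_trans _ Hd; apply: connect1; by rewrite /= H.
Qed.

Theorem lemma12 (V N : finType) (e : rel V) (W U : {set V}) (g : rel V)
    (par : N -> option N) (r : N) (beta : N -> {set V})
    (s : V) (t t' : N) :
  simple_graph e -> bipartition e W U -> planar e ->
  half_square e W g ->
  nice_tree_decomposition e par r beta ->
  s \in U ->
  is_introduce par beta t s t' ->
  Original e W U par beta t = Original e W U par beta t' /\
  Fake e W U par beta t = Fake e W U par beta t'.
Proof.
move=> [_ Hirr] [HWU _ Hbip] _ _ [[Hrt Hcov Hedge Hconn] _ _] Hs [Hch Hbt Hsn].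
have Hpar : par t' = Some t.
  have : t' \in children par t by rewrite Hch set11.
  by rewrite inE => /eqP.
have HsW : s \notin W.
  apply/negP => HsW'; have : s \in W :&: U by rewrite inE HsW' Hs.
  by rewrite HWU inE.
have HUW : forall x y, x \in U -> e x y -> y \in W.
  move=> x y Hx /Hbip /orP [/andP [Hx' _]| /andP [_ ->]] //.
  have : x \in W :&: U by rewrite inE Hx' Hx.
  by rewrite HWU inE.
have Hgam : forall w, (w \in gamma par beta t) = (w \in beta t) || (w \in gamma par beta t').
  move=> w; apply/idP/idP.
  - case/bigcupP => y Hy Hw; move/connectP: Hy => [p].
    case/lastP: p => [|p z] /=.
      by move=> _ Ey; rewrite Ey Hw.
    rewrite rcons_path last_rcons => /andP [pth Hl] Ez; subst z.
    have : last y p \in children par t by rewrite inE.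
    rewrite Hch inE => /eqP Hl'.
    apply/orP; right; apply/bigcupP; exists y => //.
    by apply/connectP; exists p.
  - case/orP => [Hw | /bigcupP [y Hy Hw]]; apply/bigcupP.
      by exists t => //; exact: connect0.
    exists y => //; apply: connect_trans Hy (connect1 _); by rewrite /= Hpar.
have F2 : forall w, e s w -> w \in gamma par beta t' -> w \in beta t'.
  move=> w Hsw /bigcupP [y Hy Hwy]; apply: contraT => Hwt'.
  case: (Hedge _ _ Hsw) => z /andP [Hsz Hwz].
  have Hz : desc par z t'.
    apply: (@closure _ _ [set u | w \in beta u] t' y z) => //; rewrite ?inE //.
    by apply: Hconn; rewrite inE.
  have Ht : desc par t t'.
    apply: (@closure _ _ [set u | s \in beta u] t' z t) => //; rewrite ?inE //.
    by apply: Hconn; rewrite inE // Hbt setU11.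
  by case: (@no_cycle _ _ _ _ _ Hrt Hpar Ht).
have Hdw : forall u w, w \in derived_bag e W U par beta u -> w \in W.
  move=> u w; case/setUP => [/setIP [_ ->] | /bigcupP [x /setIP [_ HxU] /setIP [Hxw _]]] //.
  by apply: HUW HxU _; rewrite inE in Hxw.
have Hder : forall w, (w \in derived_bag e W U par beta t) =
    (w \in derived_bag e W U par beta t') || (e s w && (w \in gamma par beta t')).
  move=> w; rewrite /derived_bag; apply/idP/idP.
  - case/setUP => [/setIP [Hw HW] | /bigcupP [x /setIP [Hx HxU] /setIP [Hxw Hwg]]].
    + rewrite Hbt in Hw; case/setU1P: Hw => [E|Hw].
        by subst; rewrite HW in HsW.
      by rewrite in_setU in_setI Hw HW.
    + rewrite Hbt in Hx; rewrite Hgam in Hwg; rewrite inE in Hxw.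
      case/orP: Hwg => [Hw | Hwg].
        rewrite Hbt in Hw; case/setU1P: Hw => [E|Hw].
          by subst; have := HUW _ _ HxU Hxw; rewrite (negbTE HsW).
        by rewrite in_setU in_setI Hw (HUW _ _ HxU Hxw).
      case/setU1P: Hx => [E|Hx].
        by subst; rewrite Hxw Hwg orbT.
      apply/orP; left; apply/setUP; right; apply/bigcupP; exists x.
        by rewrite in_setI Hx HxU.
      by rewrite in_setI inE Hxw Hwg.
  - case/orP => [/setUP [/setIP [Hw HW] | /bigcupP [x /setIP [Hx HxU] /setIP [Hxw Hwg]]] | /andP [Hsw Hwg]].
    + apply/setUP; left; by rewrite in_setI Hbt in_setU1 Hw orbT HW.
    + apply/setUP; right; apply/bigcupP; exists x.
        by rewrite in_setI Hbt in_setU1 Hx orbT HxU.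
      by rewrite in_setI Hxw Hgam Hwg orbT.
    + apply/setUP; right; apply/bigcupP; exists s.
        by rewrite in_setI Hbt setU11 Hs.
      by rewrite in_setI inE Hsw Hgam Hwg orbT.
split; apply/setP => w; rewrite /Original /Fake.
- rewrite in_setI in_setI Hder Hbt in_setU1.
  case: (eqVneq w s) => [->|Hne].
    rewrite (negbTE Hsn) /=; apply/norP; split.
      by apply/negP => /Hdw Hx; rewrite Hx in HsW.
    by rewrite Hirr.
  rewrite /=; case Hb: (w \in beta t') => //=.
  case Hd: (w \in derived_bag e W U par beta t') => //=.
  apply/negbTE/negP => /andP [Hsw _].
  have : w \in derived_bag e W U par beta t'.
    by rewrite /derived_bag in_setU in_setI Hb (HUW _ _ Hs Hsw).
  by rewrite Hd.
- rewrite !in_setD Hder Hbt in_setU1.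
  case: (eqVneq w s) => [->|Hne].
    rewrite ?eqxx /=; case Hd: (s \in derived_bag e W U par beta t').
      by have := Hdw _ _ Hd; rewrite (negbTE HsW).
    by rewrite andbF.
  rewrite /=; case Hb: (w \in beta t') => //=.
  case: (w \in derived_bag e W U par beta t') => //=.
  apply/negbTE/negP => /andP [Hsw Hg].
  by rewrite (F2 _ Hsw Hg) in Hb.
Qed.
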